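(* Let $G=(g_{uv})_{1\le u,v\le m}$ be a symmetric complex matrix with units on the diagonal with $\mathrm{rank}\,G\le 2r$ for an integer $r$, let $0<\varkappa<1$, and suppose that for any $u,v\in[m]$ either $|g_{uv}-1|>\varkappa$ or $|g_{uv}-1|<2^{-4(r+1)}\varkappa$. Let $\mathcal K=\mathcal K(G,\varkappa)$ and let $\succ$ be any ordering of $\mathcal K$ produced by the construction in the context. Then for any two simplices $\sigma,\tau\in\mathcal K$ with $\dim\sigma=\dim\tau=r$ and $\mu(\sigma)=\mu(\tau)$, we have $\sigma\cup\tau\in\mathcal K$.
   Context: $[m]=\{1,\dots,m\}$; $\Gamma(G,\varkappa)$ is the graph on $[m]$ with $\{u,v\}$ an edge iff $|g_{uv}-1|<\varkappa$; $\mathcal K(G,\varkappa)$ is its clique complex; $\dim\sigma=|\sigma|-1$. For a strict total ordering $\succ$ of $\mathcal K$ and non-empty $\sigma$, $\mu(\sigma)$ is the $\succ$-largest facet of $\sigma$. Construction of $\succ$: simplices of larger dimension are larger; vertices are ordered arbitrarily; assuming $\succ$ is defined on $(s-1)$-simplices, for $s$-simplices put $\sigma\succ\tau$ if $\mu(\sigma)\succ\mu(\tau)$; for each $(s-1)$-simplex $\rho$, let $\mathbb V_\rho$ be the set of vertices $v\notin\rho$ with $\rho\cup\{v\}\in\mathcal K$ and $\mu(\rho\cup\{v\})=\rho$, $t=|\mathbb V_\rho|$; choose $v_1,\dots,v_t$ successively: for $j<t$, among pairs $w\ne z$ in $\mathbb V_\rho\setminus\{v_1,\dots,v_{j-1}\}$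 pick a pair $(w^0,z^0)$ maximizing $|g_{wz}-1|$ (ties broken arbitrarily) and set $v_j=w^0$; $v_t$ is the remaining vertex; then put $\rho\cup\{v_1\}\succ\dots\succ\rho\cup\{v_t\}$. *)

(* Defs.v *)
From HB Require Import structures.
From mathcomp Require Import all_boot all_order all_algebra.
From mathcomp Require Import reals.
From mathcomp Require Import complex.
Set Implicit Arguments. Unset Strict Implicit. Unset Printing Implicit Defensive.
Import Order.TTheory GRing.Theory Num.Theory.
Local Open Scope ring_scope.

Section Defs.
Variables (R : realType) (m : nat).
Local Notation C := (R[i]).

Definition cabs (z : C) : R := ComplexField.Normc.normc z.

Definition dist1 (G : 'M[C]_m) (u v : 'I_m) : R := cabs (G u v - 1).

(* Simplices of the clique complex K(G, kappa) of the graph Gamma(G, kappa):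
   non-empty sets of vertices that are pairwise adjacent. *)
Definition inK (G : 'M[C]_m) (kappa : R) (s : {set 'I_m}) : bool :=
  (s != set0) &&
  [forall u in s, forall v in s, (u != v) ==> (dist1 G u v < kappa)].

Definition facets (s : {set 'I_m}) : {set {set 'I_m}} := [set s :\ v | v in s].

(* mu(s): the ord-largest facet of s ([ord a b] means a ≻ b). *)
Definition mu (ord : rel {set 'I_m}) (s : {set 'I_m}) : {set 'I_m} :=
  odflt set0 [pick r in facets s |
               [forall r' in facets s, (r' == r) || ord r r']].

Definition Vset (G : 'M[C]_m) (kappa : R) (ord : rel {set 'I_m})
    (rho : {set 'I_m}) : {set 'I_m} :=
  [set v | (v \notin rho) && inK G kappa (v |: rho) && (mu ord (v |: rho) == rho)].

Definition constructed_order (G : 'M[C]_m) (kappa : R) (ord : rel {set 'I_m}) : Prop :=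
  (forall s, inK G kappa s -> ~~ ord s s) /\
      (forall s t u, inK G kappa s -> inK G kappa t -> inK G kappa u ->
                     ord s t -> ord t u -> ord s u) /\
      (forall s t, inK G kappa s -> inK G kappa t -> s != t -> ord s t || ord t s) /\
      (forall s t, inK G kappa s -> inK G kappa t -> (#|t| < #|s|)%N -> ord s t) /\
      (forall s t, inK G kappa s -> inK G kappa t -> #|s| = #|t| -> (1 < #|s|)%N ->
                   ord (mu ord s) (mu ord t) -> ord s t) /\
  (* within the block of rho, the order rho+v_1 ≻ ... ≻ rho+v_t follows the
     greedy choice: v_j is an endpoint w^0 of a pair (w^0,z^0) of distinct
     remaining vertices maximizing |g_wz - 1|, whenever at least two vertices
     remain (j < t). *)
      (forall rho v, inK G kappa rho -> v \in Vset G kappa ord rho ->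
         let Rv := [set w in Vset G kappa ord rho | ~~ ord (w |: rho) (v |: rho)] in
         (1 < #|Rv|)%N ->
         exists2 z, z \in Rv & (z != v) /\
           (forall w z', w \in Rv -> z' \in Rv -> w != z' ->
                         dist1 G w z' <= dist1 G v z)).

End Defs.

(* Main.v *)
Require Import Defs.
From HB Require Import structures.
From mathcomp Require Import all_boot all_order all_algebra.
From mathcomp Require Import reals.
From mathcomp Require Import complex.
From mathcomp Require Import ring lra zify.
Import Order.TTheory GRing.Theory Num.Theory.

Lemma n1 i r : (i < r -> (r - i.+1).+1 <= r)%N. Proof. lia. Qed.
Lemma n2 i r : (i < r -> r - i.+1 < r)%N. Proof. lia. Qed.
Lemma n3 i r : (i < r -> (r - i.+1).+1 <= r <= r)%N. Proof. lia. Qed.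
Lemma n4 i r : (i.+1 < r -> 1 < (r - i.+1).+1)%N. Proof. lia. Qed.
Lemma n5 i r : (i < r -> r <= i.+1 -> r - i.+1 = 0)%N. Proof. lia. Qed.
Lemma n6 i j r : (j < i < r -> (r - i.+1).+1 <= r - j.+1 <= r)%N. Proof. lia. Qed.
Lemma n7 i j r : (j < i < r -> j < r)%N. Proof. lia. Qed.
Lemma n8 i j r : (i < j < r -> (r - j.+1).+1 < (r - i.+1).+1)%N. Proof. lia. Qed.
Lemma n9 k i r : (i < r -> k < (r - i.+1).+1 -> k <= (r - i.+1).+1 <= r)%N. Proof. lia. Qed.
Lemma n_odd j r : odd j -> (j < (2 * r).+1)%N -> j = (2 * j./2).+1 /\ (j./2 < r)%N.
Proof. move=> oj; have := odd_double_half j; rewrite oj -mul2n; move: (j./2) => h; lia. Qed.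
Lemma n_even j r : ~~ odd j -> (0 < j)%N -> (j < (2 * r).+1)%N ->
  j = (2 * j.-1./2).+2 /\ (j.-1./2 < r)%N.
Proof.
move=> oj j0; have := odd_double_half j.-1.
have -> : odd j.-1 by move: oj; case: j j0 => //= j _; rewrite negbK.
rewrite -mul2n; move: (j.-1./2) => h; lia.
Qed.

Local Open Scope ring_scope.

Lemma dep_rows (F : fieldType) m n (f : 'I_n -> 'I_m) (G : 'M[F]_m) :
  (\rank G < n)%N -> exists2 y : 'rV_n, y != 0 &
     forall q, \sum_k y 0 k * G (f k) q = 0.
Proof.
move=> hr.
have hM : (\rank (rowsub f G) < n)%N.
  by rewrite rowsubE (leq_ltn_trans (mxrankM_maxr _ _)).
have : kermx (rowsub f G) != 0.
  rewrite -mxrank_eq0 mxrank_ker; rewrite -lt0n subn_gt0 //.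
case/rowV0Pn => v /sub_kermxP hv v0; exists v => // q.
transitivity ((v *m rowsub f G) 0 q); last by rewrite hv mxE.
by rewrite mxE; apply: eq_bigr => k _; rewrite mxE.
Qed.

Lemma cabs_ge0 {R : realType} (z : R[i]) : 0 <= cabs z.
Proof. by case: z => a b; rewrite /cabs /= sqrtr_ge0. Qed.

Lemma cabsD {R : realType} (x y : R[i]) : cabs (x + y) <= cabs x + cabs y.
Proof. exact: (@le_normcD R x y). Qed.

Lemma cabsM {R : realType} (x y : R[i]) : cabs (x * y) = cabs x * cabs y.
Proof. exact: ComplexField.Normc.normcM. Qed.

Lemma cabsN {R : realType} (x : R[i]) : cabs (- x) = cabs x.
Proof. exact: (@normcN R x). Qed.

Lemma cabs0 {R : realType} : cabs (0 : R[i]) = 0.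
Proof. exact: ComplexField.Normc.normc0. Qed.

Lemma cabs_eq0 {R : realType} (x : R[i]) : cabs x = 0 -> x = 0.
Proof. exact: ComplexField.Normc.eq0_normc. Qed.

Lemma cabs_sum {R : realType} (m n : nat) (F : nat -> R[i]) :
  cabs (\sum_(m <= i < n) F i) <= \sum_(m <= i < n) cabs (F i).
Proof.
apply: (big_ind2 (fun x y => cabs x <= y)) => //.
- by rewrite cabs0.
- by move=> x1 y1 x2 y2 h1 h2; apply: (le_trans (cabsD x1 x2)); exact: lerD.
Qed.


Lemma split3 {V : zmodType} (F : nat -> V) {r j : nat} : (j < r)%N ->
  \sum_(0 <= i < r) F i = \sum_(0 <= i < j) F i + F j + \sum_(j.+1 <= i < r) F i.
Proof.
move=> hj; rewrite (big_cat_nat (n:=j) (leq0n j) (ltnW hj)) /= (big_ltn hj) /=.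
by rewrite addrA.
Qed.

Lemma Tbound {R : realType} (r : nat) (a A : R[i]) (b e B E : nat -> R[i])
  (al : R) (be ga : nat -> R) :
  cabs A <= al -> (forall i, (i < r)%N -> cabs (B i) <= be i) ->
  (forall i, (i < r)%N -> cabs (E i) <= ga i) ->
  cabs (a * A + \sum_(0 <= i < r) (b i * B i + e i * E i)) <=
  cabs a * al + \sum_(0 <= i < r) (cabs (b i) * be i + cabs (e i) * ga i).
Proof.
move=> hA hB hE; apply: (le_trans (cabsD _ _)); apply: lerD.
  by rewrite cabsM ler_wpM2l ?cabs_ge0.
apply: (le_trans (cabs_sum _ _ _)); apply: ler_sum_nat => i /andP[_ hi].
apply: (le_trans (cabsD _ _)); rewrite !cabsM; apply: lerD;
  by rewrite ler_wpM2l ?cabs_ge0 ?hB ?hE.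
Qed.

Lemma sum_isolate {R : realType} (r j : nat) (f g : nat -> R[i]) : (j < r)%N ->
  \sum_(0 <= i < r) (f i) = f j + \sum_(0 <= i < r) (if i == j then 0 else f i).
Proof.
move=> hj; rewrite (split3 f hj) (split3 (fun i => if i == j then 0 else f i) hj) /= eqxx.
have e1 : \sum_(0 <= i < j) f i = \sum_(0 <= i < j) (if i == j then 0 else f i).
  by apply: eq_big_nat => i /andP[_ hi]; rewrite (ltn_eqF hi).
have e2 : \sum_(j.+1 <= i < r) f i = \sum_(j.+1 <= i < r) (if i == j then 0 else f i).
  by apply: eq_big_nat => i /andP[hi _]; rewrite (gtn_eqF hi).
rewrite e1 e2; ring.
Qed.

Lemma cabs_sum_le {R : realType} (m n : nat) (F : nat -> R[i]) (g : nat -> R) :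
  (forall i, (m <= i < n)%N -> cabs (F i) <= g i) ->
  cabs (\sum_(m <= i < n) F i) <= \sum_(m <= i < n) g i.
Proof. by move=> h; apply: (le_trans (cabs_sum _ _ _)); apply: ler_sum_nat. Qed.

Lemma term_bound {R : realType} (x y B E : R[i]) (be ga : R) :
  cabs B <= be -> cabs E <= ga ->
  cabs (x * B + y * E) <= cabs x * be + cabs y * ga.
Proof.
move=> hB hE; apply: (le_trans (cabsD _ _)); rewrite !cabsM; apply: lerD;
  by rewrite ler_wpM2l ?cabs_ge0.
Qed.

Lemma analytic {R : realType} (m r : nat) (G : 'M[R[i]]_m) (kappa delta : R)
  (x0 : 'I_m) (xs zs : nat -> 'I_m) (c : nat -> R) (a : R[i]) (b e : nat -> R[i]) :
  (forall p q, dist1 G p q = dist1 G q p) ->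
  (forall p, G p p = 1) ->
  0 < kappa -> 0 < delta ->
  (forall i, (i < r)%N -> dist1 G (xs i) x0 < delta) ->
  (forall i j, (i < r)%N -> (j < r)%N -> dist1 G (xs i) (xs j) < delta) ->
  (forall i, (i < r)%N -> dist1 G (zs i) x0 < delta) ->
  (forall i j, (j < i < r)%N -> dist1 G (zs i) (xs j) < delta) ->
  (forall i, (i < r)%N -> dist1 G (xs i) (zs i) = c i) ->
  (forall i, (i < r)%N -> kappa <= c i) ->
  (forall i j, (i < j < r)%N -> dist1 G (zs i) (xs j) <= c i) ->
  (forall i j, (i < r)%N -> (j < r)%N -> dist1 G (zs i) (zs j) <= c i + c j) ->
  delta + (2 ^+ (2 * r + 3) + 2 ^+ (r + 2)) * delta / kappa < 1 ->
  (forall q, a * G x0 q + \sum_(0 <= i < r) (b i * G (xs i) q + e i * G (zs i) q) = 0) ->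
  a = 0 /\ (forall i, (i < r)%N -> b i = 0 /\ e i = 0).
Proof.
move=> dsym hdiag k0 d0 hx0 hxx hz0 hzx hc hck hzxc hzz hcoef H.
have dd p : dist1 G p p = 0 by rewrite /dist1 hdiag subrr cabs0.
have dge p q : 0 <= dist1 G p q by exact: cabs_ge0.
pose na := cabs a; pose nb i := cabs (b i); pose ne i := cabs (e i).
have nage : 0 <= na by exact: cabs_ge0.
have nbge i : 0 <= nb i by exact: cabs_ge0.
have nege i : 0 <= ne i by exact: cabs_ge0.
pose NB := \sum_(0 <= i < r) nb i; pose NE := \sum_(0 <= i < r) ne i.
pose N := na + NB + NE.
pose s := a + \sum_(0 <= i < r) (b i + e i).
pose T q := a * (G x0 q - 1) +
   \sum_(0 <= i < r) (b i * (G (xs i) q - 1) + e i * (G (zs i) q - 1)).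
have eqT q : s + T q = 0.
  rewrite -(H q) /s /T.
  have -> : a * G x0 q = a + a * (G x0 q - 1) by rewrite mulrBr mulr1 addrC subrK.
  rewrite [X in _ = _ + X](eq_bigr (fun i => (b i + e i) +
     (b i * (G (xs i) q - 1) + e i * (G (zs i) q - 1)))); last by move=> i _; ring.
  rewrite [in RHS]big_split /=; ring.
have cE p q : cabs (G p q - 1) = dist1 G p q by [].
have Ns : cabs s <= delta * N.
  have -> : s = - T x0 by apply/eqP; rewrite -addr_eq0 eqT.
  rewrite cabsN /T; apply: le_trans; first apply: (@Tbound R r a (G x0 x0 - 1) b e (fun i => G (xs i) x0 - 1) (fun i => G (zs i) x0 - 1) delta (fun _ => delta)
      (fun _ => delta) _ _ _).
  - by rewrite cE dd ltW.
  - by move=> i hi; rewrite cE ltW ?hx0.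
  - by move=> i hi; rewrite cE ltW ?hz0.
  have -> : \sum_(0 <= i < r) (cabs (b i) * delta + cabs (e i) * delta) = (NB + NE) * delta.
    by rewrite mulrDl !mulr_suml -big_split.
  rewrite /N; rewrite /na le_eqVlt; apply/orP; left; apply/eqP; ring.
pose u i := ne i * c i.
have NE2 : NB + NE = \sum_(0 <= i < r) (nb i + ne i) by rewrite big_split.
have Hu j : (j < r)%N -> u j <= 2 * (delta * N) + \sum_(0 <= i < j) u i.
  move=> hj; have eq1 := eqT (xs j); rewrite /T (split3 _ hj) in eq1.
  move: eq1.
  set sA := \sum_(0 <= i < j) _; set sB := \sum_(j.+1 <= i < r) _.
  set A := G x0 (xs j) - 1; set Bj := G (xs j) (xs j) - 1; set Ej := G (zs j) (xs j) - 1.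
  move=> eq1.
  have E1 : e j * Ej = - (s + a * A + sA + b j * Bj + sB).
    by apply/eqP; rewrite -addr_eq0 -eq1; apply/eqP; ring.
  have c1 : cabs (e j * Ej) = u j by rewrite cabsM cE dsym hc.
  have c2 : cabs (e j * Ej) <= cabs s + cabs (a * A) + cabs sA + cabs (b j * Bj) + cabs sB.
    rewrite E1 cabsN.
    have h1 := cabsD (s + a * A + sA + b j * Bj) sB.
    have h2 := cabsD (s + a * A + sA) (b j * Bj).
    have h3 := cabsD (s + a * A) sA.
    have h4 := cabsD s (a * A).
    lra.
  have c3 : cabs (a * A) <= na * delta.
    by rewrite cabsM ler_wpM2l // cE dsym ltW ?hx0.
  have c4 : cabs (b j * Bj) = 0 by rewrite cabsM cE dd mulr0.
  have c5 : cabs sA <= \sum_(0 <= i < j) (nb i * delta + ne i * c i).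
    apply: cabs_sum_le => i /andP[_ hi]; apply: term_bound.
      by rewrite cE ltW // hxx // (ltn_trans hi).
    by rewrite cE hzxc // hi.
  have c6 : cabs sB <= \sum_(j.+1 <= i < r) (nb i * delta + ne i * delta).
    apply: cabs_sum_le => i /andP[hi1 hi2]; apply: term_bound.
      by rewrite cE ltW // hxx.
    by rewrite cE ltW // hzx // hi1.
  have c7 : \sum_(0 <= i < j) (nb i * delta + ne i * c i) <=
            delta * \sum_(0 <= i < j) (nb i + ne i) + \sum_(0 <= i < j) u i.
    rewrite mulr_sumr -big_split /=; apply: ler_sum => i _.
    have := nege i; rewrite /u; nra.
  have c8 : \sum_(j.+1 <= i < r) (nb i * delta + ne i * delta) =
            delta * \sum_(j.+1 <= i < r) (nb i + ne i).
    by rewrite mulr_sumr; apply: eq_bigr => i _; ring.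
  have c9 : delta * N = delta * na + delta * \sum_(0 <= i < j) (nb i + ne i) +
       delta * (nb j + ne j) + delta * \sum_(j.+1 <= i < r) (nb i + ne i).
    by rewrite /N -addrA NE2 (split3 _ hj); ring.
  have c10 : 0 <= delta * (nb j + ne j) by rewrite mulr_ge0 ?addr_ge0 // ltW.
  have c11 : na * delta = delta * na by ring.
  lra.
pose U := \sum_(0 <= i < r) u i.
have cpos i : (i < r)%N -> 0 < c i by move=> hi; exact: (lt_le_trans k0 (hck i hi)).
have uge i : (i < r)%N -> 0 <= u i by move=> hi; rewrite /u mulr_ge0 // ltW ?cpos.
have Hb j : (j < r)%N ->
    nb j * c j <= 2 * (delta * N) + U + c j * NE + c j * \sum_(j.+1 <= i < r) nb i.
  move=> hj; have eq1 := eqT (zs j); rewrite /T (split3 _ hj) in eq1.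
  move: eq1.
  set sA := \sum_(0 <= i < j) _; set sB := \sum_(j.+1 <= i < r) _.
  set A := G x0 (zs j) - 1; set Bj := G (xs j) (zs j) - 1; set Ej := G (zs j) (zs j) - 1.
  move=> eq1.
  have E1 : b j * Bj = - (s + a * A + sA + e j * Ej + sB).
    by apply/eqP; rewrite -addr_eq0 -eq1; apply/eqP; ring.
  have c1 : cabs (b j * Bj) = nb j * c j by rewrite cabsM cE hc.
  have c2 : cabs (b j * Bj) <= cabs s + cabs (a * A) + cabs sA + cabs (e j * Ej) + cabs sB.
    rewrite E1 cabsN.
    have h1 := cabsD (s + a * A + sA + e j * Ej) sB.
    have h2 := cabsD (s + a * A + sA) (e j * Ej).
    have h3 := cabsD (s + a * A) sA.
    have h4 := cabsD s (a * A).
    lra.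
  have c3 : cabs (a * A) <= na * delta.
    by rewrite cabsM ler_wpM2l // cE dsym ltW ?hz0.
  have c4 : cabs (e j * Ej) = 0 by rewrite cabsM cE dd mulr0.
  have c5 : cabs sA <= \sum_(0 <= i < j) (nb i * delta + ne i * (c i + c j)).
    apply: cabs_sum_le => i /andP[_ hi]; apply: term_bound.
      by rewrite cE dsym ltW // hzx // hi.
    by rewrite cE hzz // (ltn_trans hi).
  have c6 : cabs sB <= \sum_(j.+1 <= i < r) (nb i * c j + ne i * (c i + c j)).
    apply: cabs_sum_le => i /andP[hi1 hi2]; apply: term_bound.
      by rewrite cE dsym hzxc // hi1.
    by rewrite cE hzz.
  have c7 : \sum_(0 <= i < j) (nb i * delta + ne i * (c i + c j)) =
      delta * \sum_(0 <= i < j) nb i + \sum_(0 <= i < j) u i + c j * \sum_(0 <= i < j) ne i.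
    rewrite !mulr_sumr -!big_split /=; apply: eq_bigr => i _; rewrite /u; ring.
  have c8 : \sum_(j.+1 <= i < r) (nb i * c j + ne i * (c i + c j)) =
      c j * \sum_(j.+1 <= i < r) nb i + \sum_(j.+1 <= i < r) u i +
      c j * \sum_(j.+1 <= i < r) ne i.
    rewrite !mulr_sumr -!big_split /=; apply: eq_bigr => i _; rewrite /u; ring.
  have c9 : U = \sum_(0 <= i < j) u i + u j + \sum_(j.+1 <= i < r) u i by rewrite /U (split3 _ hj).
  have c10 : c j * NE = c j * \sum_(0 <= i < j) ne i + c j * ne j +
      c j * \sum_(j.+1 <= i < r) ne i by rewrite /NE (split3 _ hj); ring.
  have c11 : delta * N = delta * na + delta * \sum_(0 <= i < j) nb i + delta * nb j +
      delta * \sum_(j.+1 <= i < r) nb i + delta * NE by rewrite /N /NB (split3 _ hj); ring.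
  have c12 : 0 <= delta * nb j by rewrite mulr_ge0 // ltW.
  have c13 : 0 <= delta * \sum_(j.+1 <= i < r) nb i by rewrite mulr_ge0 ?sumr_ge0 // ltW.
  have c14 : 0 <= delta * NE by rewrite mulr_ge0 ?sumr_ge0 // ltW.
  have c15 : 0 <= c j * ne j by rewrite mulr_ge0 // ltW ?cpos.
  have c16 : na * delta = delta * na by ring.
  have c17 := uge j hj.
  lra.
have NEge : 0 <= NE by rewrite sumr_ge0.
have NBge : 0 <= NB by rewrite sumr_ge0.
have Kge : 0 <= delta * N.
  by apply: mulr_ge0; [exact: ltW | rewrite /N; lra].
have hP j : (j <= r)%N -> \sum_(0 <= i < j) u i <= (2 ^+ j - 1) * (2 * (delta * N)).
  elim: j => [_|j IH hj]; first by rewrite big_geq // expr0 subrr mul0r.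
  rewrite big_nat_recr //=.
  have h1 := Hu j hj; have h2 := IH (ltnW hj).
  have h3 : (2 ^+ j.+1 - 1) * (2 * (delta * N)) =
     2 * ((2 ^+ j - 1) * (2 * (delta * N))) + 2 * (delta * N) by rewrite exprS; ring.
  lra.
have hU : U <= (2 ^+ r - 1) * (2 * (delta * N)) by exact: hP r (leqnn r).
have hNE : kappa * NE <= U.
  rewrite /NE /U mulr_sumr; apply: ler_sum_nat => i /andP[_ hi].
  by rewrite /u mulrC ler_wpM2l // hck.
pose W := (2 * (delta * N) + U) / kappa.
have hW : kappa * W = 2 * (delta * N) + U by rewrite /W mulrC divfK // gt_eqF.
have Uge : 0 <= U by have := hU; have := hNE; have := mulr_ge0 (ltW k0) NEge; lra.
have Wge : 0 <= W by apply: divr_ge0; [lra | exact: ltW].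
pose F := W + NE.
have Hb2 j : (j < r)%N -> nb j <= F + \sum_(j.+1 <= i < r) nb i.
  move=> hj; have h := Hb j hj; have hcj := hck j hj; have cj0 := cpos j hj.
  set Q := \sum_(j.+1 <= i < r) nb i in h *.
  rewrite /F; rewrite leNgt; apply/negP => hlt.
  have h1 : 0 < (nb j - NE - Q - W) * c j by apply: mulr_gt0 => //; lra.
  have h2 : 0 <= (c j - kappa) * W by apply: mulr_ge0 => //; lra.
  nra.
have hQ k : (k <= r)%N -> \sum_(r - k <= i < r) nb i <= (2 ^+ k - 1) * F.
  elim: k => [_|k IH hk]; first by rewrite subn0 big_geq // expr0 subrr mul0r.
  have hj : (r - k.+1 < r)%N by rewrite ltn_subrL; apply/andP; split => //; apply: leq_trans hk.
  rewrite (big_ltn hj) subnSK //.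
  have h1 := Hb2 _ hj; rewrite subnSK // in h1.
  have h2 := IH (ltnW hk).
  have h3 : (2 ^+ k.+1 - 1) * F = 2 * ((2 ^+ k - 1) * F) + F by rewrite exprS; ring.
  lra.
have hNB : NB <= (2 ^+ r - 1) * F by have := hQ r (leqnn r); rewrite subnn.
have hna : na <= delta * N + NB + NE.
  rewrite /na; have -> : a = s - \sum_(0 <= i < r) (b i + e i) by rewrite /s addrK.
  have h1 := cabsD s (- \sum_(0 <= i < r) (b i + e i)).
  rewrite cabsN in h1.
  have h2 : cabs (\sum_(0 <= i < r) (b i + e i)) <= NB + NE.
    rewrite NE2; apply: cabs_sum_le => i _; exact: cabsD.
  lra.
pose p : R := 2 ^+ r.
have p1 : 1 <= p by rewrite /p exprn_ege1 // ler1n.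
have g1 : kappa * F <= (4 * p - 2) * (delta * N).
  rewrite /F mulrDr hW; rewrite /p in p1 *; nra.
have g2 : kappa * NB <= (p - 1) * ((4 * p - 2) * (delta * N)).
  have : kappa * NB <= (p - 1) * (kappa * F).
    by have := ler_wpM2l (ltW k0) hNB; rewrite /p; move=> h; nra.
  move=> h; apply: (le_trans h); apply: ler_wpM2l => //; lra.
have g3 : kappa * NE <= 2 * (p - 1) * (delta * N) by rewrite /p in p1 *; nra.
have hk : kappa * N <= kappa * (delta * N) + (8 * (p * p) + 4 * p) * (delta * N).
  have : kappa * na <= kappa * (delta * N + NB + NE) by rewrite ler_wpM2l // ltW.
  move=> h.
  have hk1 : kappa * N = kappa * na + kappa * NB + kappa * NE by rewrite /N; ring.
  have hk2 : kappa * (delta * N + NB + NE) = kappa * (delta * N) + kappa * NB + kappa * NE by ring.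
  have hk3 : (p - 1) * ((4 * p - 2) * (delta * N)) =
     4 * (p * p * (delta * N)) - 6 * (p * (delta * N)) + 2 * (delta * N) by ring.
  have hk4 : 2 * (p - 1) * (delta * N) = 2 * (p * (delta * N)) - 2 * (delta * N) by ring.
  have hk5 : (8 * (p * p) + 4 * p) * (delta * N) =
     8 * (p * p * (delta * N)) + 4 * (p * (delta * N)) by ring.
  have hk6 : 0 <= p * (delta * N) by apply: mulr_ge0 => //; lra.
  lra.
have hc2 : kappa * delta + (8 * (p * p) + 4 * p) * delta < kappa.
  have e1 : (2 ^+ (2 * r + 3) : R) = 8 * (p * p).
    by rewrite exprD mulnC exprM /p expr2 mulrC; congr (_ * _); rewrite !exprS expr0; ring.
  have e2 : (2 ^+ (r + 2) : R) = 4 * p.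
    by rewrite exprD /p mulrC; rewrite !exprS expr0; ring.
  rewrite e1 e2 in hcoef.
  set X := 8 * (p * p) + 4 * p in hcoef *.
  have hX : X * delta / kappa * kappa = X * delta by rewrite divfK // gt_eqF.
  have hh : 0 < 1 - (delta + X * delta / kappa) by rewrite subr_gt0.
  have := mulr_gt0 hh k0.
  have hh2 : (1 - (delta + X * delta / kappa)) * kappa =
     kappa - kappa * delta - X * delta / kappa * kappa by ring.
  lra.
have N0 : N <= 0.
  rewrite leNgt; apply/negP => hN.
  set X := 8 * (p * p) + 4 * p in hk hc2.
  have : 0 < (kappa - (kappa * delta + X * delta)) * N by rewrite mulr_gt0 // subr_gt0.
  nra.
have na0 : na = 0 by apply/eqP; rewrite eq_le nage andbT; rewrite /N in N0; lra.
split; first exact: cabs_eq0.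
move=> i hi.
have hnb : nb i <= NB.
  rewrite /NB (split3 _ hi).
  have : 0 <= \sum_(0 <= j < i) nb j by apply: sumr_ge0 => j _; exact: nbge.
  have : 0 <= \sum_(i.+1 <= j < r) nb j by apply: sumr_ge0 => j _; exact: nbge.
  lra.
have hne : ne i <= NE.
  rewrite /NE (split3 _ hi).
  have : 0 <= \sum_(0 <= j < i) ne j by apply: sumr_ge0 => j _; exact: nege.
  have : 0 <= \sum_(i.+1 <= j < r) ne j by apply: sumr_ge0 => j _; exact: nege.
  lra.
split; apply: cabs_eq0; apply/eqP; rewrite eq_le cabs_ge0 andbT.
  have := nbge i; rewrite /N in N0; rewrite /nb in hnb; lra.
have := nege i; rewrite /N in N0; rewrite /ne in hne; lra.
Qed.

Lemma inK_sub {R : realType} {m : nat} (G : 'M[R[i]]_m) kappa (s t : {set 'I_m}) :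
  inK G kappa s -> t \subset s -> t != set0 -> inK G kappa t.
Proof.
case/andP=> _ /forallP hs ts t0; rewrite /inK t0 /=.
apply/forallP => u; apply/implyP => ut; apply/forallP => v; apply/implyP => vt.
have := hs u; rewrite (subsetP ts _ ut) /= => /forallP /(_ v).
by rewrite (subsetP ts _ vt).
Qed.

Lemma inK_close {R : realType} {m : nat} (G : 'M[R[i]]_m) kappa (s : {set 'I_m}) u v :
  inK G kappa s -> u \in s -> v \in s -> u != v -> dist1 G u v < kappa.
Proof.
case/andP=> _ /forallP hs us vs uv.
by have := hs u; rewrite us /= => /forallP /(_ v); rewrite vs uv.
Qed.

Lemma max_exists {m : nat} (K : pred {set 'I_m}) (ord : rel {set 'I_m})
  (tr : forall s t u, K s -> K t -> K u -> ord s t -> ord t u -> ord s u)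
  (tot : forall s t, K s -> K t -> s != t -> ord s t || ord t s)
  (X : seq {set 'I_m}) :
  (forall t, t \in X -> K t) -> X != [::] ->
  exists2 t, t \in X & forall t', t' \in X -> (t' == t) || ord t t'.
Proof.
elim: X => [//|x X IH] HK _.
have Kx : K x := HK x (mem_head x X).
have [X0|X0] := eqVneq X [::].
  by exists x; rewrite ?mem_head // X0 => t'; rewrite inE => ->.
have HK' : forall t, t \in X -> K t by move=> t h; apply: HK; rewrite inE h orbT.
have [t tX ht] := IH HK' X0.
have Kt := HK' t tX.
have [xt|xt] := eqVneq x t.
  exists t; first by rewrite inE tX orbT.
  by move=> t'; rewrite inE => /orP[/eqP ->|/ht //]; rewrite xt eqxx.
case/orP: (tot x t Kx Kt xt) => h.
  exists x; first exact: mem_head.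
  move=> t'; rewrite inE => /orP[->//|t'X].
  case/orP: (ht t' t'X) => [/eqP->|htt']; first by rewrite h orbT.
  by rewrite (tr x t t' Kx Kt (HK' t' t'X) h htt') orbT.
exists t; first by rewrite inE tX orbT.
by move=> t'; rewrite inE => /orP[/eqP->|/ht //]; rewrite h orbT.
Qed.

Lemma mu_spec {R : realType} {m : nat} (G : 'M[R[i]]_m) kappa ord
  (co : constructed_order G kappa ord) (s : {set 'I_m}) :
  inK G kappa s -> (1 < #|s|)%N ->
  (exists2 x, x \in s & mu ord s = s :\ x) /\
  (forall x, x \in s -> (s :\ x == mu ord s) || ord (mu ord s) (s :\ x)).
Proof.
case: co => irr [tr [tot _]] Ks s2.
have Kf : forall t, t \in enum (facets s) -> inK G kappa t.
  move=> t; rewrite mem_enum => /imsetP[x xs ->].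
  apply: inK_sub Ks (subD1set s x) _.
  by rewrite -card_gt0; move: s2; rewrite (cardsD1 x s) xs.
have [x0 x0s] : exists x, x \in s.
  by apply/set0Pn; rewrite -card_gt0 (ltn_trans _ s2).
have ne : enum (facets s) != [::].
  apply/eqP => h; have : s :\ x0 \in enum (facets s) by rewrite mem_enum; apply/imsetP; exists x0.
  by rewrite h.
have [t tF ht] := @max_exists m (inK G kappa) ord tr tot _ Kf ne.
rewrite /mu; case: pickP => [t' /andP[t'F /forallP H]|/(_ t)]; last first.
  rewrite -mem_enum tF /= => /negP; elim; apply/forallP => t''; apply/implyP => h.
  by apply: ht; rewrite mem_enum.
split; first by case/imsetP: t'F => x xs ->; exists x.
move=> x xs; have := H (s :\ x); rewrite /facets; case: imsetP => //; elim; by exists x.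
Qed.

Lemma setU1D1 {m : nat} (s : {set 'I_m}) p x : p != x ->
  (p |: s) :\ x = p |: (s :\ x).
Proof.
move=> px; apply/setP => y; rewrite !inE.
by case: (eqVneq y x) => [->|]; rewrite ?(negbTE px) ?andbF ?orbF //= eq_sym (negbTE px).
Qed.

Lemma step {R : realType} {m : nat} (G : 'M[R[i]]_m) kappa ord
  (co : constructed_order G kappa ord) (s : {set 'I_m}) p :
  inK G kappa s -> (1 < #|s|)%N -> p \notin s -> inK G kappa (p |: s) ->
  mu ord (p |: s) = s ->
  [/\ p \notin mu ord s, inK G kappa (p |: mu ord s),
      mu ord (p |: mu ord s) = mu ord s & ~~ ord (p |: mu ord s) s].
Proof.
move=> Ks s2 ps Kps hmu.
have co' := co; case: co' => irr [tr [tot [_ [muc _]]]].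
have [[x xs ex] _] := mu_spec _ _ _ co _ Ks s2.
have px : p != x by apply: contraNneq ps => ->.
have pt : p \notin mu ord s by rewrite ex !inE negb_and ps orbT.
have tsub : mu ord s \subset s by rewrite ex subD1set.
have Kpt : inK G kappa (p |: mu ord s).
  apply: inK_sub Kps _ _; first by apply: setUS.
  by apply/set0Pn; exists p; rewrite setU11.
have ps2 : (1 < #|p |: s|)%N by rewrite cardsU1 ps (ltn_trans s2).
have [_ hmax] := mu_spec _ _ _ co _ Kps ps2.
have hf : (p |: s) :\ x = p |: mu ord s by rewrite setU1D1 // ex.
have ord1 : ord s (p |: mu ord s).
  have := hmax x; rewrite inE xs orbT hf hmu => /(_ isT) /orP[/eqP h|//].
  by move: ps; rewrite -h setU11.
have nord : ~~ ord (p |: mu ord s) s.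
  apply/negP => h; have := irr _ Ks; rewrite (tr _ _ _ Ks Kpt Ks ord1 h).
  done.
have cs : #|s| = (#|mu ord s|).+1 by rewrite (cardsD1 x s) xs ex.
have Kt : inK G kappa (mu ord s).
  by apply: inK_sub Ks tsub _; rewrite -card_gt0; move: s2; rewrite cs.
have pt2 : (1 < #|p |: mu ord s|)%N by rewrite cardsU1 pt; move: s2; rewrite cs.
have [_ hmax2] := mu_spec _ _ _ co _ Kpt pt2.
split => //.
have := hmax2 p; rewrite setU11 => /(_ isT).
have -> : (p |: mu ord s) :\ p = mu ord s.
  by apply/setP => y; rewrite !inE; case: (eqVneq y p) => [->|] //=; rewrite (negbTE pt).
case/orP => [/eqP //|h].
have : ord (p |: mu ord s) s.
  apply: muc => //; first by rewrite cardsU1 pt cs.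
by rewrite (negbTE nord).
Qed.

Lemma VsetP {R : realType} {m : nat} (G : 'M[R[i]]_m) kappa ord rho p :
  p \in Vset G kappa ord rho =
  [&& p \notin rho, inK G kappa (p |: rho) & mu ord (p |: rho) == rho].
Proof. by rewrite /Vset inE andbA. Qed.

Lemma chain {R : realType} {m : nat} (G : 'M[R[i]]_m) kappa ord
  (co : constructed_order G kappa ord) (sg : {set 'I_m}) r :
  inK G kappa sg -> #|sg| = r.+1 -> forall k, (k <= r)%N ->
  [/\ inK G kappa (iter k (mu ord) sg), #|iter k (mu ord) sg| = (r.+1 - k)%N
    & iter k (mu ord) sg \subset sg].
Proof.
move=> Ks cs; elim => [_|k IH hk]; first by rewrite subn0.
have [Kk ck sk] := IH (ltnW hk).
have k2 : (1 < #|iter k (mu ord) sg|)%N by rewrite ck subSn ?ltnS ?subn_gt0 // ltnW.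
have [[x xs ex] _] := mu_spec _ _ _ co _ Kk k2.
have cx : #|iter k (mu ord) sg| = (#|iter k.+1 (mu ord) sg|).+1.
  by rewrite /= ex (cardsD1 x) xs.
split.
- apply: inK_sub Kk _ _; first by rewrite /= ex subD1set.
  by rewrite -card_gt0; move: k2; rewrite cx.
- by apply/eqP; rewrite subSS -eqSS -cx ck subSn // ltnW.
- by apply: subset_trans sk; rewrite /= ex subD1set.
Qed.

Lemma chain_diff {R : realType} {m : nat} (G : 'M[R[i]]_m) kappa ord
  (co : constructed_order G kappa ord) (sg : {set 'I_m}) r :
  inK G kappa sg -> #|sg| = r.+1 -> forall k, (k < r)%N ->
  exists x, [/\ iter k (mu ord) sg :\: iter k.+1 (mu ord) sg = [set x],
    iter k (mu ord) sg = x |: iter k.+1 (mu ord) sg &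
    x \in Vset G kappa ord (iter k.+1 (mu ord) sg)].
Proof.
move=> Ks cs k hk.
have [Kk ck sk] := chain _ _ _ co _ _ Ks cs _ (ltnW hk).
have k2 : (1 < #|iter k (mu ord) sg|)%N by rewrite ck subSn ?ltnS ?subn_gt0 // ltnW.
have [[x xs ex] _] := mu_spec _ _ _ co _ Kk k2.
have e1 : iter k (mu ord) sg = x |: iter k.+1 (mu ord) sg.
  by rewrite /= ex setD1K.
exists x; split => //.
- by rewrite /= ex setDDr setDv set0U setIC; apply/setP => y; rewrite !inE;
     case: (eqVneq y x) => [->|] //=; rewrite ?xs ?andbF.
- rewrite VsetP -e1 Kk /= ex !inE eqxx /=.
  by rewrite -ex.
Qed.

Lemma chain_nest {m : nat} (f : {set 'I_m} -> {set 'I_m}) (sg : {set 'I_m}) r :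
  (forall k, (k < r)%N -> iter k.+1 f sg \subset iter k f sg) ->
  forall a b, (a <= b <= r)%N -> iter b f sg \subset iter a f sg.
Proof.
move=> h a; elim => [|b IH] /andP[ab br].
  by move: ab; rewrite leqn0 => /eqP->.
case: (eqVneq a b.+1) => [->//|ne].
have ab' : (a <= b)%N by rewrite -ltnS ltn_neqAle ne ab.
apply: subset_trans (h _ br) (IH _); by rewrite ab' ltnW.
Qed.

Lemma down {R : realType} {m : nat} (G : 'M[R[i]]_m) kappa ord
  (co : constructed_order G kappa ord) (sg : {set 'I_m}) r p k :
  inK G kappa sg -> #|sg| = r.+1 ->
  p \in Vset G kappa ord (iter k (mu ord) sg) ->
  forall k', (k <= k' <= r)%N ->
  p \in Vset G kappa ord (iter k' (mu ord) sg) /\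
  ((k < k')%N -> ~~ ord (p |: iter k' (mu ord) sg) (iter k'.-1 (mu ord) sg)).
Proof.
move=> Ks cs hp; elim => [|d IH] /andP[kk' k'r].
  by move: kk' hp; rewrite leqn0 => /eqP->.
case: (eqVneq k d.+1) => [ekd|ne]; first by subst k; split => //; rewrite ltnn.
have kd : (k <= d)%N by rewrite -ltnS ltn_neqAle ne kk'.
have [Kd cd _] := chain _ _ _ co _ _ Ks cs _ (ltnW k'r).
have d2 : (1 < #|iter d (mu ord) sg|)%N.
  by rewrite cd subSn ?ltnS ?subn_gt0 // ltnW.
have hkd : (k <= d <= r)%N by rewrite kd ltnW.
have [hv _] := IH hkd.
move: hv; rewrite VsetP => /and3P[pn Kp /eqP mp].
have [pn' Kp' mp' no] := step _ _ _ co _ _ Kd d2 pn Kp mp.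
split => //.
by rewrite VsetP pn' Kp' mp' eqxx.
Qed.

Lemma nat_ineq r : (1 + 2 ^ (2 * r + 3) + 2 ^ (r + 2) <= 2 ^ (4 * r.+1))%N.
Proof.
have -> : (2 * r + 3 = r + r + 3)%N by lia.
have -> : (4 * r.+1 = r + r + r + r + 4)%N by lia.
rewrite !expnD; have : (0 < 2 ^ r)%N by rewrite expn_gt0.
move: (2 ^ r)%N => P hP.
have -> : (2 ^ 3 = 8)%N by []. have -> : (2 ^ 2 = 4)%N by []. have -> : (2 ^ 4 = 16)%N by [].
nia.
Qed.

Lemma coef_ok {R : realType} r (kappa : R) : 0 < kappa -> kappa < 1 ->
  kappa / 2 ^+ (4 * r.+1) +
  (2 ^+ (2 * r + 3) + 2 ^+ (r + 2)) * (kappa / 2 ^+ (4 * r.+1)) / kappa < 1.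
Proof.
move=> k0 k1.
have hN : (1 + 2 ^+ (2 * r + 3) + 2 ^+ (r + 2) : R) <= 2 ^+ (4 * r.+1).
  have := nat_ineq r; rewrite -(ler_nat R) !natrD !natrX => h.
  exact: h.
set D := (2 ^+ (4 * r.+1) : R) in hN *.
set A := (2 ^+ (2 * r + 3) + 2 ^+ (r + 2) : R) in hN *.
have D0 : 0 < D by rewrite /D exprn_gt0.
have -> : A * (kappa / D) / kappa = A / D by field; rewrite !gt_eqF.
have h1 : kappa / D < 1 / D by rewrite ltr_pM2r ?invr_gt0.
have h2 : 1 / D + A / D = (1 + A) / D by field; rewrite gt_eqF.
have h3 : (1 + A) / D <= 1 by rewrite ler_pdivrMr // mul1r /A addrA.
lra.
Qed.

Lemma pairsum {V : zmodType} (H : nat -> V) r :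
  \sum_(0 <= k < (2 * r).+1) H k = H 0%N + \sum_(0 <= i < r) (H (2 * i).+1 + H (2 * i).+2).
Proof.
elim: r => [|r IH]; first by rewrite muln0 big_nat1 big_geq // addr0.
have -> : ((2 * r.+1).+1 = (2 * r).+3)%N by lia.
rewrite big_nat_recr //= big_nat_recr //= IH big_nat_recr //=.
by rewrite -!addrA.
Qed.

Lemma half_odd i : ((2 * i).+1./2 = i)%N.
Proof. by rewrite mul2n -addn1 addnC -[1%N]/(nat_of_bool true) half_bit_double. Qed.

Lemma half_even i : ((2 * i).+1./2 = i)%N.
Proof. exact: half_odd. Qed.

Lemma core {R : realType} (m r : nat) (G : 'M[R[i]]_m) (kappa : R)
  (ord : rel {set 'I_m}) (sg : {set 'I_m}) (v w : 'I_m) :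
  (forall p q, dist1 G p q = dist1 G q p) ->
  (forall u, G u u = 1) ->
  (\rank G <= 2 * r)%N ->
  0 < kappa -> kappa < 1 ->
  (forall u v, kappa < dist1 G u v \/ dist1 G u v < kappa / 2 ^+ (4 * r.+1)) ->
  constructed_order G kappa ord ->
  inK G kappa sg -> #|sg| = r.+1 -> (0 < r)%N ->
  v \in Vset G kappa ord (mu ord sg) -> sg = v |: mu ord sg ->
  w \in Vset G kappa ord (mu ord sg) -> ~~ ord (w |: mu ord sg) sg ->
  v != w -> kappa < dist1 G v w -> False.
Proof.
move=> dsym hdiag hrank k0 k1 gap co Ks cs r0 hv esg hw hwn vw dvw.
have co' := co; case: co' => irr [tr [tot [_ [_ greedy]]]].
pose delta := kappa / 2 ^+ (4 * r.+1).
have D1 : (1 < 2 ^+ (4 * r.+1) :> R).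
  by rewrite exprn_egt1 // ?ltr1n.
have d0 : 0 < delta by rewrite divr_gt0 // (lt_trans ltr01 D1).
have dk : delta < kappa.
  by rewrite ltr_pdivrMr ?(lt_trans ltr01 D1) // ltr_pMr.
have dd p : dist1 G p p = 0 by rewrite /dist1 hdiag subrr cabs0.
have close S p q : inK G kappa S -> p \in S -> q \in S -> dist1 G p q < delta.
  move=> KS pS qS; case: (eqVneq p q) => [->|pq]; first by rewrite dd.
  have := inK_close _ _ _ _ _ KS pS qS pq; case: (gap p q) => //; lra.
pose u k := iter k (mu ord) sg.
have chk k : (k <= r)%N -> [/\ inK G kappa (u k), #|u k| = (r.+1 - k)%N & u k \subset sg].
  exact: chain _ _ _ co _ _ Ks cs k.
have nest a b : (a <= b <= r)%N -> u b \subset u a.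
  apply: chain_nest => k hk.
  have [x [_ e1 _]] := chain_diff _ _ _ co _ _ Ks cs k hk.
  by have := subsetUr [set x] (iter k.+1 (mu ord) sg); rewrite -e1.
have [x0 ex0] : exists x0, u r = [set x0].
  by apply/cards1P; have [_ -> _] := chk r (leqnn r); rewrite subSnn.
pose Xs i := odflt x0 [pick x in u (r - i.+1)%N :\: u (r - i.+1)%N.+1].
have Xspec i : (i < r)%N -> u (r - i.+1)%N = Xs i |: u (r - i.+1)%N.+1 /\
     Xs i \in Vset G kappa ord (u (r - i.+1)%N.+1).
  move=> hi; have hk : (r - i.+1 < r)%N by exact: n2.
  have [x [hd e1 hx]] := chain_diff _ _ _ co _ _ Ks cs _ hk.
  rewrite /Xs; case: pickP => [y|]; rewrite hd.
    by move=> /set1P -> /=.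
  by move=> /(_ x); rewrite inE eqxx.
pose B i := u (r - i.+1)%N.+1.
pose Rs i := [set w0 in Vset G kappa ord (B i) | ~~ ord (w0 |: B i) (Xs i |: B i)].
have Rmem i p k : (i < r)%N -> (k < (r - i.+1).+1)%N ->
    p \in Vset G kappa ord (u k) -> p \in Rs i.
  move=> hi hk hp.
  have hk' : (k <= (r - i.+1).+1 <= r)%N by exact: n9.
  have [hv' hn] := down _ _ _ co _ _ _ _ Ks cs hp _ hk'.
  rewrite inE hv' /=; have := hn hk; rewrite /= -/(u (r - i.+1)%N).
  by move=> h; rewrite /B -(Xspec i hi).1.
have vwR i : (i < r)%N -> v \in Rs i /\ w \in Rs i.
  move=> hi; case: (ltnP i.+1 r) => h.
    by split; apply: (Rmem _ _ 1%N hi) => //; exact: n4.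
  have ei : (r - i.+1 = 0)%N by exact: n5.
  have hX := (Xspec i hi).1; rewrite ei in hX.
  have e2 : Xs i |: B i = sg by rewrite /B ei -hX.
  have eB : B i = mu ord sg by rewrite /B ei.
  split; rewrite in_set /= e2 eB; [rewrite hv -esg irr // | by rewrite hw hwn].

have XsB i : (i < r)%N -> inK G kappa (B i) /\ Xs i \in Vset G kappa ord (B i).
  move=> hi; split; last exact: (Xspec i hi).2.
  by have [] := chk (r - i.+1).+1 (n1 _ _ hi).
have Rcard i : (i < r)%N -> (1 < #|Rs i|)%N.
  move=> hi; have [vR wR] := vwR i hi.
  have : [set v; w] \subset Rs i.
    by apply/subsetP => z /set2P[->|->].
  by move/subset_leq_card; rewrite cards2 vw.
pose P i z := [&& z \in Rs i, z != Xs i & [forall p, forall q,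
   (p \in Rs i) ==> (q \in Rs i) ==> (p != q) ==> (dist1 G p q <= dist1 G (Xs i) z)]].
pose Zs i := odflt x0 [pick z | P i z].
have Zspec i : (i < r)%N -> P i (Zs i).
  move=> hi; rewrite /Zs; case: pickP => [z //|hn].
  have [KB XB] := XsB i hi.
  have [z zR [zX zm]] := greedy (B i) (Xs i) KB XB (Rcard i hi).
  have := hn z; rewrite /P zR zX /=; move/negP; elim.
  apply/forallP => p; apply/forallP => q; apply/implyP => pR; apply/implyP => qR.
  by apply/implyP => pq; apply: zm.
pose c i := dist1 G (Xs i) (Zs i).
have cge i : 0 <= c i by exact: cabs_ge0.
have ZR i : (i < r)%N -> Zs i \in Rs i by move=> hi; case/and3P: (Zspec i hi).
have maxR i p q : (i < r)%N -> p \in Rs i -> q \in Rs i -> dist1 G p q <= c i.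
  move=> hi pR qR; case: (eqVneq p q) => [->|pq]; first by rewrite dd.
  case/and3P: (Zspec i hi) => _ _ /forallP /(_ p) /forallP /(_ q).
  by rewrite pR qR pq.
have ZV i : (i < r)%N -> Zs i \in Vset G kappa ord (B i).
  by move=> hi; have := ZR i hi; rewrite in_set => /andP[].
have Xsg i : (i < r)%N -> Xs i \in sg.
  move=> hi; have [_ _ sub] := chk (r - i.+1)%N (ltnW (n2 _ _ hi)).
  by apply: (subsetP sub); rewrite (Xspec i hi).1 setU11.
have x0sg : x0 \in sg.
  by have [_ _ sub] := chk r (leqnn r); apply: (subsetP sub); rewrite ex0 set11.
have x0B i : (i < r)%N -> x0 \in B i.
  by move=> hi; apply: (subsetP (nest _ r (n3 _ _ hi))); rewrite ex0 set11.
have XB i j : (j < i < r)%N -> Xs j \in B i.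
  move=> hij; apply: (subsetP (nest _ (r - j.+1)%N (n6 _ _ _ hij))).
  by rewrite (Xspec j (n7 _ _ _ hij)).1 setU11.
have KZ i : (i < r)%N -> inK G kappa (Zs i |: B i).
  by move=> hi; move: (ZV i hi); rewrite VsetP => /and3P[].
have hx0 i : (i < r)%N -> dist1 G (Xs i) x0 < delta.
  by move=> hi; apply: (close sg) => //; exact: Xsg.
have hxx i j : (i < r)%N -> (j < r)%N -> dist1 G (Xs i) (Xs j) < delta.
  by move=> hi hj; apply: (close sg) => //; exact: Xsg.
have hz0 i : (i < r)%N -> dist1 G (Zs i) x0 < delta.
  by move=> hi; apply: (close _ _ _ (KZ i hi)); rewrite ?setU11 // setU1r // x0B.
have hzx i j : (j < i < r)%N -> dist1 G (Zs i) (Xs j) < delta.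
  move=> hij; have hi : (i < r)%N by case/andP: hij.
  by apply: (close _ _ _ (KZ i hi)); rewrite ?setU11 // setU1r // XB.
have hck i : (i < r)%N -> kappa <= c i.
  move=> hi; have [vR wR] := vwR i hi.
  by apply: ltW; apply: (lt_le_trans dvw); exact: maxR.
have hzxc i j : (i < j < r)%N -> dist1 G (Zs i) (Xs j) <= c i.
  move=> hij; have hi : (i < r)%N by case/andP: hij => h1 h2; exact: ltn_trans h1 h2.
  have hj : (j < r)%N by case/andP: hij.
  apply: maxR => //; first exact: ZR.
  exact: (Rmem _ _ _ hi (n8 _ _ _ hij) (Xspec j hj).2).
have hzz i j : (i < r)%N -> (j < r)%N -> dist1 G (Zs i) (Zs j) <= c i + c j.
  move=> hi hj; case: (ltngtP i j) => hij.
  - have h : (i < j < r)%N by rewrite hij hj.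
    have := maxR i (Zs i) (Zs j) hi (ZR i hi) (Rmem _ _ _ hi (n8 _ _ _ h) (ZV j hj)).
    by move=> h1; apply: (le_trans h1); rewrite lerDl cge.
  - have h : (j < i < r)%N by rewrite hij hi.
    rewrite dsym.
    have := maxR j (Zs j) (Zs i) hj (ZR j hj) (Rmem _ _ _ hj (n8 _ _ _ h) (ZV i hi)).
    by move=> h1; apply: (le_trans h1); rewrite lerDr cge.
  - by rewrite hij dd addr_ge0.
have hcoef := coef_ok r _ k0 k1.
pose g k := if k == 0%N then x0 else if odd k then Xs k./2 else Zs k.-1./2.
have hrk : (\rank G < (2 * r).+1)%N by rewrite ltnS.
have [y y0 hy] := @dep_rows _ _ _ (fun k : 'I_(2 * r).+1 => g k) G hrk.
pose Y k := if (k < (2 * r).+1)%N then y 0 (inord k) else 0.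
have hY q : Y 0%N * G x0 q + \sum_(0 <= i < r) (Y (2 * i).+1 * G (Xs i) q +
    Y (2 * i).+2 * G (Zs i) q) = 0.
  transitivity (\sum_(0 <= k < (2 * r).+1) Y k * G (g k) q); last first.
    rewrite big_mkord; rewrite -[RHS](hy q); apply: eq_bigr => k _.
    by rewrite /Y ltn_ord inord_val.
  rewrite (pairsum (fun k => Y k * G (g k) q)).
  have -> : g 0%N = x0 by [].
  congr (_ + _); apply: eq_bigr => i _.
  by rewrite /g /= mul2n odd_double /= uphalf_double.
have [a0 hbe] := @analytic _ _ r G kappa delta x0 Xs Zs c _ _ _ dsym hdiag k0 d0 hx0 hxx hz0 hzx (fun i _ => erefl (c i))
   hck hzxc hzz hcoef hY.
move/eqP: y0; apply; apply/matrixP => i j; rewrite (ord1 i) mxE.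
have -> : y 0 j = Y j by rewrite /Y ltn_ord inord_val.
case: (posnP j) => [->//|j0].
have hj := ltn_ord j.
case: (boolP (odd j)) => oj.
  have [ej hr] := n_odd _ _ oj hj.
  by rewrite ej; apply: (hbe _ hr).1.
have [ej hr] := n_even _ _ oj j0 hj.
by rewrite ej; apply: (hbe _ hr).2.
Qed.

Theorem lemma10 (R : realType) (m r : nat) (G : 'M[R[i]]_m) (kappa : R)
    (ord : rel {set 'I_m}) :
  G^T = G ->
  (forall u, G u u = 1) ->
  (\rank G <= 2 * r)%N ->
  0 < kappa -> kappa < 1 ->
  (forall u v, kappa < dist1 G u v \/ dist1 G u v < kappa / 2 ^+ (4 * r.+1)) ->
  constructed_order G kappa ord ->
  forall sigma tau : {set 'I_m},
    inK G kappa sigma -> inK G kappa tau ->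
    #|sigma| = r.+1 -> #|tau| = r.+1 ->
    mu ord sigma = mu ord tau ->
    inK G kappa (sigma :|: tau).
Proof.
move=> hT hdiag hrank k0 k1 gap co sg tau Ks Kt cs ct hmu.
have dsym p q : dist1 G p q = dist1 G q p.
  by rewrite /dist1; have := congr1 (fun M : 'M_m => M q p) hT; rewrite mxE => ->.
have [v0 v0s] : exists v0, v0 \in sg by apply/set0Pn; rewrite -card_gt0 cs.
case: (posnP r) => [r0|r0].
  move: hrank; rewrite r0 muln0 leqn0 mxrank_eq0 => /eqP G0.
  by have := hdiag v0; rewrite G0 mxE => /eqP; rewrite eq_sym oner_eq0.
have co' := co; case: co' => irr [tr [tot _]].
have s2 : (1 < #|sg|)%N by rewrite cs ltnS.
have t2 : (1 < #|tau|)%N by rewrite ct ltnS.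
have [[v vs ev] _] := mu_spec _ _ _ co _ Ks s2.
have [[w wt ew] _] := mu_spec _ _ _ co _ Kt t2.
set rho := mu ord sg in ev hmu.
have esg : sg = v |: rho by rewrite ev setD1K.
have etau : tau = w |: rho by rewrite hmu ew setD1K.
have vrho : v \notin rho by rewrite ev setD11.
have wrho : w \notin rho by rewrite hmu ew setD11.
have hv : v \in Vset G kappa ord rho by rewrite VsetP vrho -esg Ks /=; apply/eqP.
have hw : w \in Vset G kappa ord rho by rewrite VsetP wrho -etau Kt /=; apply/eqP.
case: (eqVneq v w) => [evw|vw].
  by rewrite etau -evw -esg setUid.
have dvw : dist1 G v w < kappa.
  case: (gap v w) => [hgt|hlt]; last first.
    apply: (lt_trans hlt); rewrite ltr_pdivrMr ?exprn_gt0 // ltr_pMr //.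
    by rewrite exprn_egt1 // ltr1n.
  exfalso.
  have st : sg != tau.
    apply: contraNneq vw => e; move: vs; rewrite e etau !inE (negbTE vrho) orbF.
    by [].
  case/orP: (tot _ _ Ks Kt st) => h.
    apply: (@core _ m r G kappa ord sg v w dsym hdiag hrank k0 k1 gap co Ks cs r0 hv esg hw _ vw hgt).
    rewrite -etau; apply/negP => h2; have := irr _ Ks.
    by rewrite (tr _ _ _ Ks Kt Ks h h2).
  have hv' : v \in Vset G kappa ord (mu ord tau) by rewrite -hmu.
  have hw' : w \in Vset G kappa ord (mu ord tau) by rewrite -hmu.
  apply: (@core _ m r G kappa ord tau w v dsym hdiag hrank k0 k1 gap co Kt ct r0 hw' _ hv' _ _ _).
  - by rewrite -hmu.
  - rewrite -hmu -esg; apply/negP => h2; have := irr _ Kt.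
    by rewrite (tr _ _ _ Kt Ks Kt h h2).
  - by rewrite eq_sym.
  - by rewrite dsym.
rewrite /inK; apply/andP; split.
  by apply/set0Pn; exists v; rewrite inE vs.
apply/forallP => x; apply/implyP => hx; apply/forallP => y; apply/implyP => hy.
apply/implyP => xy.
case/setUP: hx => xs; case/setUP: hy => ys.
- exact: (inK_close _ _ _ _ _ Ks xs ys xy).
- case: (boolP (x \in tau)) => xt; first exact: (inK_close _ _ _ _ _ Kt xt ys xy).
  case: (boolP (y \in sg)) => ysg; first exact: (inK_close _ _ _ _ _ Ks xs ysg xy).
  have ex : x = v.
    move: xs; rewrite esg in_setU1 => /orP[/eqP//|xr].
    by move: xt; rewrite etau in_setU1 xr orbT.
  have ey : y = w.
    move: ys; rewrite etau in_setU1 => /orP[/eqP//|yr].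
    by move: ysg; rewrite esg in_setU1 yr orbT.
  by rewrite ex ey.
- case: (boolP (y \in tau)) => yt; first exact: (inK_close _ _ _ _ _ Kt xs yt xy).
  case: (boolP (x \in sg)) => xsg; first exact: (inK_close _ _ _ _ _ Ks xsg ys xy).
  have ey : y = v.
    move: ys; rewrite esg in_setU1 => /orP[/eqP//|yr].
    by move: yt; rewrite etau in_setU1 yr orbT.
  have ex : x = w.
    move: xs; rewrite etau in_setU1 => /orP[/eqP//|xr].
    by move: xsg; rewrite esg in_setU1 xr orbT.
  by rewrite ex ey dsym.
- exact: (inK_close _ _ _ _ _ Kt xs ys xy).
Qed.
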